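(* Assume Evidential Independence. Then for every evidence partition $\mathcal{E}$ (and choice set $\mathcal{S}$ with a unique post-learning optimal action in each state), $\mathrm{Val}_{General}(\mathcal{E})\le \mathrm{Val}_{Good}(\mathcal{E})$.
   Context: Standing setup: $\Omega$ is a finite set of states; $p$ is a probability function on $\Omega$; $u:\mathscr{O}\to\mathbb{R}$ a utility function on outcomes; actions are functions $f:\Omega\to\mathscr{O}$; for a probability $q$, $\mathbb{E}_q(f)=\sum_{\omega} q(\{\omega\})u(f(\omega))$. $\mathcal{S}$ is a finite choice set of actions; $\mathcal{E}$ is a partition of $\Omega$ with $p(E)>0$ for all $E\in\mathcal{E}$, and $p(\cdot\mid E)$ is ratio conditional probability. An update rule assigns to each $E\in\mathcal{E}$ a map $\mathcal{P}_E:E\to\Delta(\Omega)$ (probability functions on $\Omega$) with $\mathcal{P}_E(\omega)(E)=1$; $\mathcal{P}_{\mathcal{E}}(\omega)=\mathcal{P}_E(\omega)$ for $\omega\in E$. Standing assumption: for each $\omega$ there is a unique $f^*_\omega\in\mathcal{S}$ maximizing $\mathbb{E}_{\mathcal{P}_{\mathcal{E}}(\omega)}(\cdot)$ over $\mathcal{S}$. Definitions: $\mathrm{Val}_{Good}(\mathcal{E})=\sum_{E\in\mathcal{E}}p(E)\max_{f\in\mathcal{S}}\mathbb{E}_{p(\cdot\mid E)}(f)-\max_{f\in\mathcal{S}}\mathbb{E}_p(f)$; $\mathrm{Val}_{General}(\mathcal{E})=\sum_{\omega\in\Omega}p(\{\omega\})u(f^*_\omega(\omega))-\max_{f\in\mathcal{S}}\mathbb{E}_p(f)$.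 Evidential Independence: for every $E\in\mathcal{E}$, every $f\in\mathcal{S}$ and every $g\in\mathcal{S}$ with $p(C_g)>0$ where $C_g=\{\omega\in E: f^*_\omega=g\}$, one has $\mathbb{E}_{p(\cdot\mid C_g)}(f)=\mathbb{E}_{p(\cdot\mid E)}(f)$. *)

(* Defs.v *)
From mathcomp Require Import all_boot all_order all_algebra.
From mathcomp Require Import boolp.
From Stdlib Require List.
Set Implicit Arguments. Unset Strict Implicit. Unset Printing Implicit Defensive.
Import Order.TTheory GRing.Theory Num.Theory.
Local Open Scope ring_scope.

Section Defs.
Variables (R : realFieldType) (Omega : finType) (O : Type) (u : O -> R).

Definition is_prob (q : Omega -> R) : Prop :=
  (forall w, 0 <= q w) /\ \sum_w q w = 1.

Definition prob_of (q : Omega -> R) (A : {set Omega}) : R := \sum_(w in A) q w.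

Definition condp (q : Omega -> R) (A : {set Omega}) (w : Omega) : R :=
  if w \in A then q w / prob_of q A else 0.

Definition expect (q : Omega -> R) (f : Omega -> O) : R :=
  \sum_w q w * u (f w).

(* max_{f in S} E_q(f) (S is assumed nonempty where used; 0 for empty S) *)
Definition maxS (S : seq (Omega -> O)) (q : Omega -> R) : R :=
  match S with
  | [::] => 0
  | f :: s => \big[Num.max/expect q f]_(g <- s) expect q g
  end.

Definition Val_Good (S : seq (Omega -> O)) (p : Omega -> R)
  (P : {set {set Omega}}) : R :=
  \sum_(E in P) prob_of p E * maxS S (condp p E) - maxS S p.

Definition Val_General (S : seq (Omega -> O)) (p : Omega -> R)
  (fstar : Omega -> (Omega -> O)) : R :=
  \sum_w p w * u (fstar w w) - maxS S p.

Definition Cset (fstar : Omega -> (Omega -> O)) (E : {set Omega})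
  (g : Omega -> O) : {set Omega} :=
  [set w in E | `[< fstar w = g >] ].

Definition EvidentialIndependence (S : seq (Omega -> O)) (p : Omega -> R)
  (P : {set {set Omega}}) (fstar : Omega -> (Omega -> O)) : Prop :=
  forall E, E \in P -> forall f g, List.In f S -> List.In g S ->
    0 < prob_of p (Cset fstar E g) ->
    expect (condp p (Cset fstar E g)) f = expect (condp p E) f.

End Defs.

(* Main.v *)
Require Import Defs.
From mathcomp Require Import all_boot all_order all_algebra.
From mathcomp Require Import boolp.
From mathcomp Require Import ring lra.
From Stdlib Require List.
Import Order.TTheory GRing.Theory Num.Theory.
Local Open Scope ring_scope.

Lemma bigmax_aux (R : realFieldType) (T : Type) (F : T -> R) (s : seq T) (x : R) :
  x <= \big[Num.max/x]_(h <- s) F h /\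
  (forall h, List.In h s -> F h <= \big[Num.max/x]_(h <- s) F h).
Proof.
elim: s => [|a s [IH1 IH2]]; first by rewrite big_nil; split => //.
rewrite big_cons; split.
  by rewrite le_max IH1 orbT.
move=> h [->|Hh]; first by rewrite le_max lexx.
by rewrite le_max IH2 ?orbT.
Qed.

Lemma maxS_ge (R : realFieldType) (Omega : finType) (O : Type) (u : O -> R)
  (S : seq (Omega -> O)) q f : List.In f S -> expect u q f <= maxS u S q.
Proof.
case: S => [//|g s] /= [->|Hf].
  by case: (@bigmax_aux _ _ (fun h => expect u q h) s (expect u q f)).
by case: (@bigmax_aux _ _ (fun h => expect u q h) s (expect u q g)) => _; apply.
Qed.

Section Main.
Variables (R : realFieldType) (Omega : finType) (O : Type) (u : O -> R)
  (p : Omega -> R) (fstar : Omega -> (Omega -> O)).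
Hypothesis p_ge0 : forall w, 0 <= p w.

Lemma Cset_mem (E : {set Omega}) (g : Omega -> O) w : (w \in Cset fstar E g) = (w \in E) && `[< fstar w = g >].
Proof. by rewrite /Cset inE. Qed.

Lemma prob_ge_mem (A : {set Omega}) w : w \in A -> p w <= prob_of p A.
Proof.
move=> Hw; rewrite /prob_of (bigD1 w) //= lerDl.
by apply: sumr_ge0 => i _; apply: p_ge0.
Qed.

Lemma blockE (E : {set Omega}) :
  \sum_(w in E) p w * u (fstar w w) =
  \sum_(w in E) p w * expect u (condp p (Cset fstar E (fstar w))) (fstar w).
Proof.
rewrite /expect.
under [RHS]eq_bigr => w _ do rewrite mulr_sumr.
rewrite exchange_big /= [LHS]big_mkcond /=.
apply: eq_bigr => v _.
case: (boolP (v \in E)) => vE; rewrite ?vE ?(negbTE vE); last first.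
  rewrite big1 // => w wE; rewrite /condp Cset_mem (negbTE vE) /=.
  by rewrite !mul0r mulr0.
set C := Cset fstar E (fstar v).
have vC : v \in C by rewrite Cset_mem vE; apply/asboolP.
symmetry; transitivity (\sum_(w in C) p w * (p v / prob_of p C * u (fstar v v))).
  rewrite [LHS]big_mkcond [RHS]big_mkcond /=; apply: eq_bigr => w _.
  rewrite /condp Cset_mem vE /= Cset_mem.
  case: (boolP (w \in E)) => wE //=.
  case: asboolP => Hvw; case: asboolP => Hwv //.
  - have -> : Cset fstar E (fstar w) = C.
      by apply/setP => x; rewrite !Cset_mem Hvw.
    by rewrite -Hvw.
  - by exfalso; apply: Hwv; rewrite Hvw.
  - by exfalso; apply: Hvw; rewrite Hwv.
  - by rewrite !mul0r mulr0.
rewrite -mulr_suml -/(prob_of p C).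
have [H0|Hn0] := eqVneq (prob_of p C) 0.
  have : p v <= 0 by rewrite -H0; apply: prob_ge_mem.
  move=> Hle; have -> : p v = 0 by apply/eqP; rewrite eq_le Hle p_ge0.
  by rewrite H0 !mul0r.
by field.
Qed.

End Main.

Theorem theorem3 (R : realFieldType) (Omega : finType) (O : Type) (u : O -> R)
  (p : Omega -> R) (S : seq (Omega -> O)) (P : {set {set Omega}})
  (Q : {set Omega} -> Omega -> Omega -> R)
  (fstar : Omega -> (Omega -> O)) :
  is_prob p ->
  partition P [set: Omega] ->
  (forall E, E \in P -> 0 < prob_of p E) ->
  (* update rule: P_E(w) is a probability with P_E(w)(E) = 1, for w in E *)
  (forall E w, E \in P -> w \in E -> is_prob (Q E w) /\ prob_of (Q E w) E = 1) ->
  (* standing assumption: unique maximizer of E_{P_calE(w)} over S *)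
  (forall w, exists! f, List.In f S /\
     forall g, List.In g S -> expect u (Q (pblock P w) w) g <= expect u (Q (pblock P w) w) f) ->
  (* fstar w is that maximizer *)
  (forall w, List.In (fstar w) S /\
     forall g, List.In g S -> expect u (Q (pblock P w) w) g <= expect u (Q (pblock P w) w) (fstar w)) ->
  EvidentialIndependence u S p P fstar ->
  Val_General u S p fstar <= Val_Good u S p P.
Proof.
move=> [p_ge0 _] /and3P [/eqP covP trivP _] _ _ _ Hfs EI.
rewrite /Val_General /Val_Good lerD2r.
have -> : \sum_w p w * u (fstar w w) = \sum_(E in P) \sum_(w in E) p w * u (fstar w w).
  rewrite -big_trivIset // covP; apply: eq_bigl => w; by rewrite inE.
apply: ler_sum => E EP.
rewrite (@blockE _ _ _ u p fstar p_ge0 E) /prob_of mulr_suml.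
apply: ler_sum => w wE.
have [H0|Hpos] := eqVneq (p w) 0; first by rewrite H0 !mul0r.
have pw : 0 < p w by rewrite lt_def Hpos p_ge0.
apply: ler_wpM2l; first exact: p_ge0.
have wC : w \in Cset fstar E (fstar w) by rewrite Cset_mem wE; apply/asboolP.
rewrite EI //; try by case: (Hfs w).
- by apply: maxS_ge; case: (Hfs w).
- by apply: (lt_le_trans pw); apply: prob_ge_mem.
Qed.
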